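(* For two integer matrices $M,M'\in\mathrm{Mat}(2,\mathbb{Z})$, the following are equivalent: (a) for all integers $n\ge2$, the reductions mod $n$ of $M$ and $M'$ are $\mathrm{Mat}(2,\mathbb{Z}_n)^\times$-conjugate; (b) $\det(M)=\det(M')$, $\mathrm{trace}(M)=\mathrm{trace}(M')$ and $\mathrm{mgcd}(M)=\mathrm{mgcd}(M')$.
   Context: For $M=\begin{pmatrix}a&b\\c&d\end{pmatrix}$, $\mathrm{mgcd}(M)=\gcd(b,c,d-a)$, a non-negative integer, equal to $0$ iff $b=c=d-a=0$. $\mathrm{Mat}(2,\mathbb{Z}_n)^\times$ is the group of invertible $2\times2$ matrices over $\mathbb{Z}_n=\mathbb{Z}/n\mathbb{Z}$. *)

(* Defs.v *)
From mathcomp Require Import all_boot all_order all_algebra.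
Set Implicit Arguments. Unset Strict Implicit. Unset Printing Implicit Defensive.
Import GRing.Theory Num.Theory.
Local Open Scope ring_scope.

Definition i0 : 'I_2 := ord0.
Definition i1 : 'I_2 := ord_max.

Definition mgcd (M : 'M[int]_2) : int :=
  gcdz (gcdz (M i0 i1) (M i1 i0)) (M i1 i1 - M i0 i0).

Definition redmx (n : nat) (M : 'M[int]_2) : 'M['Z_n]_2 :=
  map_mx (fun z : int => z%:~R) M.

Definition mx_conj (R : comUnitRingType) (A B : 'M[R]_2) : Prop :=
  exists P : 'M[R]_2, P \in unitmx /\ P *m A *m invmx P = B.

(* Main.v *)
Require Import Defs.
From mathcomp Require Import all_boot all_order all_algebra.
From mathcomp Require Import ring lra zify.
Set Implicit Arguments. Unset Strict Implicit. Unset Printing Implicit Defensive.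
Import GRing.Theory Num.Theory.
Local Open Scope ring_scope.

Definition mk2 {R : Type} (a b c d : R) : 'M[R]_2 :=
  \matrix_(i < 2, j < 2) if i == i0 then (if j == i0 then a else b)
                          else (if j == i0 then c else d).

Lemma ord2P (i : 'I_2) : i = i0 \/ i = i1.
Proof. case: i => [[|[|k]] Hk]; [left|right|]; try apply: val_inj; done. Qed.

Lemma mk2E (R : Type) (M : 'M[R]_2) :
  M = mk2 (M i0 i0) (M i0 i1) (M i1 i0) (M i1 i1).
Proof.
apply/matrixP => i j; rewrite mxE.
by case: (ord2P i) => ->; case: (ord2P j) => ->.
Qed.

Lemma mk2_00 (R : Type) (a b c d : R) : mk2 a b c d i0 i0 = a.
Proof. by rewrite mxE. Qed.
Lemma mk2_01 (R : Type) (a b c d : R) : mk2 a b c d i0 i1 = b.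
Proof. by rewrite mxE. Qed.
Lemma mk2_10 (R : Type) (a b c d : R) : mk2 a b c d i1 i0 = c.
Proof. by rewrite mxE. Qed.
Lemma mk2_11 (R : Type) (a b c d : R) : mk2 a b c d i1 i1 = d.
Proof. by rewrite mxE. Qed.

Lemma mk2_mul (R : pzRingType) (a b c d a' b' c' d' : R) :
  mk2 a b c d *m mk2 a' b' c' d' =
  mk2 (a*a' + b*c') (a*b' + b*d') (c*a' + d*c') (c*b' + d*d').
Proof.
apply/matrixP => i j; rewrite !mxE !big_ord_recl big_ord0 addr0 !mxE.
by case: (ord2P i) => ->; case: (ord2P j) => ->.
Qed.

Lemma det_mk2 (R : comPzRingType) (a b c d : R) :
  \det (mk2 a b c d) = a * d - b * c.
Proof.
rewrite (expand_det_row _ i0) !big_ord_recl big_ord0 addr0 /cofactor !mxE /=.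
rewrite !det_mx11 !mxE /=. 
rewrite expr0 expr1 !mul1r mulN1r mulrN. done.
Qed.

Lemma tr_mk2 (R : pzRingType) (a b c d : R) : \tr (mk2 a b c d) = a + d.
Proof. by rewrite /mxtrace !big_ord_recl big_ord0 addr0 !mxE. Qed.

Lemma map_mk2 (R S : Type) (f : R -> S) (a b c d : R) :
  map_mx f (mk2 a b c d) = mk2 (f a) (f b) (f c) (f d).
Proof.
apply/matrixP => i j; rewrite !mxE.
by case: (ord2P i) => ->; case: (ord2P j) => ->.
Qed.

Lemma conj_intro (R : comUnitRingType) (A B P : 'M[R]_2) :
  P \in unitmx -> P *m A = B *m P -> mx_conj A B.
Proof. by move=> uP h; exists P; split => //; rewrite h mulmxK. Qed.

Lemma conj_sym (R : comUnitRingType) (A B : 'M[R]_2) : mx_conj A B -> mx_conj B A.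
Proof.
case=> P [uP <-]; exists (invmx P); split; first by rewrite unitmx_inv.
by rewrite invmxK !mulmxA mulmxKV // mulVmx // mul1mx.
Qed.

Lemma conj_elim (R : comUnitRingType) (A B : 'M[R]_2) :
  mx_conj A B -> exists2 P, P \in unitmx & P *m A = B *m P.
Proof. by case=> P [uP <-]; exists P => //; rewrite mulmxKV. Qed.

Lemma conj_trans (R : comUnitRingType) (A B C : 'M[R]_2) :
  mx_conj A B -> mx_conj B C -> mx_conj A C.
Proof.
move=> /conj_elim [P uP hP] /conj_elim [Q uQ hQ].
apply: (@conj_intro _ _ _ (Q *m P)); first by rewrite unitmx_mul uQ uP.
by rewrite -mulmxA hP mulmxA hQ mulmxA.
Qed.

Lemma conj_refl (R : comUnitRingType) (A : 'M[R]_2) : mx_conj A A.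
Proof. by apply: (@conj_intro _ _ _ 1%:M); rewrite ?unitmx1 // mul1mx mulmx1. Qed.

Lemma natZp_eq0 (n k : nat) : (1 < n)%N -> ((k%:R : 'Z_n) == 0) = (n %| k)%N.
Proof.
move=> n1; apply/eqP/idP => [h|h].
  by move: (val_Zp_nat n1 k); rewrite h /= => /esym/eqP.
by apply: val_inj; rewrite /= val_Zp_nat //; apply/eqP.
Qed.

Lemma intrZp_eq0 (n : nat) (z : int) : (1 < n)%N ->
  ((z%:~R : 'Z_n) == 0) = (n %| `|z|)%N.
Proof.
move=> n1; case: z => k.
  by have -> : (Posz k)%:~R = k%:R :> 'Z_n by []; rewrite natZp_eq0.
have -> : (Negz k)%:~R = - (k.+1)%:R :> 'Z_n by [].
by rewrite oppr_eq0 natZp_eq0.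
Qed.

Lemma intrZp_unit (n : nat) (z : int) : (1 < n)%N ->
  ((z%:~R : 'Z_n) \is a GRing.unit) = coprime n `|z|.
Proof.
move=> n1; case: z => k.
  by have -> : (Posz k)%:~R = k%:R :> 'Z_n by []; rewrite unitZpE.
have -> : (Negz k)%:~R = - (k.+1)%:R :> 'Z_n by [].
by rewrite unitrN unitZpE.
Qed.

Lemma conj_det_tr (R : comUnitRingType) (A B : 'M[R]_2) :
  mx_conj A B -> \det A = \det B /\ \tr A = \tr B.
Proof.
case=> P [uP <-]; split.
  have uP' : \det P \is a GRing.unit by rewrite -unitmxE.
  by rewrite !det_mulmx det_inv mulrC mulrA mulVr ?mul1r.
by rewrite mxtrace_mulC mulmxA mulVmx // mul1mx.
Qed.

Lemma int_eq_mod (x y : int) :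
  (forall n : nat, (2 <= n)%N -> (x%:~R : 'Z_n) = y%:~R) -> x = y.
Proof.
move=> h; have := h (`|x - y|.+2)%N isT.
move/eqP; rewrite -subr_eq0 -rmorphB /= intrZp_eq0 //.
move=> H; case: (posnP `|x - y|) => [h0|h0].
  by move/eqP: h0; rewrite absz_eq0 subr_eq0 => /eqP.
by have := dvdn_leq h0 H; rewrite ltnNge ltnW.
Qed.

Definition isc (R : pzRingType) (A : 'M[R]_2) : bool :=
  [&& A i0 i1 == 0, A i1 i0 == 0 & A i1 i1 == A i0 i0].

Lemma isc_scalar (R : pzRingType) (A : 'M[R]_2) : isc A -> A = (A i0 i0)%:M.
Proof.
case/and3P => /eqP h1 /eqP h2 /eqP h3; apply/matrixP => i j; rewrite !mxE.
by case: (ord2P i) => ->; case: (ord2P j) => ->; rewrite /= ?mulr1n ?mulr0n.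
Qed.

Lemma isc_scalarmx (R : pzRingType) (a : R) : isc (a%:M : 'M[R]_2).
Proof. by rewrite /isc !mxE /= !mulr0n !mulr1n !eqxx. Qed.

Lemma conj_isc (R : comUnitRingType) (A B : 'M[R]_2) :
  mx_conj A B -> isc A -> isc B.
Proof.
case=> P [uP <-] /isc_scalar ->.
by rewrite scalar_mxC mulmxK // isc_scalarmx.
Qed.

Lemma redmx_isc (k : nat) (M : 'M[int]_2) : (1 < k)%N ->
  isc (redmx k M) = (k %| `|mgcd M|)%N.
Proof.
move=> k1; rewrite /isc /redmx !mxE.
have -> : ((M i1 i1)%:~R == (M i0 i0)%:~R :> 'Z_k) = ((M i1 i1 - M i0 i0)%:~R == 0 :> 'Z_k).
  by rewrite intrB subr_eq0.
rewrite !intrZp_eq0 //.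
have : (Posz k %| mgcd M)%Z = (k %| `|mgcd M|)%N by [].
by rewrite /mgcd !dvdz_gcd -andbA => <-.
Qed.

Lemma nat_eq_dvd (g h : nat) :
  (forall k, (1 < k)%N -> (k %| g)%N = (k %| h)%N) -> g = h.
Proof.
move=> H.
have L : forall g h, (forall k, (1 < k)%N -> (k %| g)%N = (k %| h)%N) -> (g %| h)%N.
  move=> {H} {}g {}h H.
  case: g H => [|[|g]] H //.
    case: h H => // h H; have := H h.+2 isT; rewrite dvdn0 => /esym.
    by move/dvdn_leq => /(_ isT); rewrite ltnn.
  by rewrite -H.
by apply/eqP; rewrite eqn_dvd !L // => k /H.
Qed.

Lemma intrFp_eq0 (p : nat) (z : int) : prime p ->
  ((z%:~R : 'F_p) == 0) = (p %| `|z|)%N.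
Proof.
move=> pp.
have E : forall k : nat, ((k%:R : 'F_p) == 0) = (p %| k)%N.
  move=> k; apply/eqP/idP => [h|h].
    by move: (val_Fp_nat pp k); rewrite h /= => /esym/eqP.
  by apply: val_inj; rewrite /= val_Fp_nat //; apply/eqP.
case: z => k.
  by have -> : (Posz k)%:~R = k%:R :> 'F_p by []; rewrite E.
have -> : (Negz k)%:~R = - (k.+1)%:R :> 'F_p by [].
by rewrite oppr_eq0 E.
Qed.

Lemma prime_in_prod (n p : nat) (P : pred nat) : prime p -> (p %| n)%N -> (0 < n)%N ->
  (p %| \prod_(q <- primes n | P q) q)%N = P p.
Proof.
move=> pp pn n0; rewrite Euclid_dvd_prod // big_has_cond.
apply/hasP/idP => [[q qn /andP[Pq pq]] | Pp].
  move: qn; rewrite mem_primes => /and3P[qp _ _].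
  by move: pq; rewrite dvdn_prime2 // => /eqP ->.
by exists p; rewrite ?mem_primes ?pp ?n0 ?pn //= Pp dvdnn.
Qed.

Lemma form_coprime (n : nat) (B C E : int) : (0 < n)%N ->
  (forall p, prime p -> (p %| n)%N ->
     ~~ [&& (p %| `|B|)%N, (p %| `|C|)%N & (p %| `|E|)%N]) ->
  exists x y : int, coprime n `|(C * x ^+ 2 + E * x * y - B * y ^+ 2)%R|.
Proof.
move=> n0 H.
set x := (\prod_(q <- primes n | (q %| `|C|)%N && ~~ (q %| `|B|)%N) q)%N.
set y := (\prod_(q <- primes n | ~~ (q %| `|C|)%N) q)%N.
exists x%:Z, y%:Z.
set f := (C * _ + _ - _).
apply/negPn/negP => ncop.
have g1 : (1 < gcdn n `|f|)%N.
  by rewrite ltn_neqAle eq_sym ncop /= gcdn_gt0 n0.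
have pp := pdiv_prime g1.
set p := pdiv _ in pp.
have pn : (p %| n)%N by apply: dvdn_trans (pdiv_dvd _) (dvdn_gcdl _ _).
have pf : (p %| `|f|)%N by apply: dvdn_trans (pdiv_dvd _) (dvdn_gcdr _ _).
have px : (p %| x)%N = (p %| `|C|)%N && ~~ (p %| `|B|)%N by rewrite prime_in_prod.
have py : (p %| y)%N = ~~ (p %| `|C|)%N by rewrite prime_in_prod.
have Hp := H p pp pn.
move: pf; rewrite -intrFp_eq0 // /f.
rewrite !expr2 intrB intrD !intrM /=.
have ex : forall z : int, ((z%:~R : 'F_p) == 0) = (p %| `|z|)%N.
  by move=> z; rewrite intrFp_eq0.
have [hC|hC] := boolP (p %| `|C|)%N.
  have /eqP C0 : (C%:~R : 'F_p) == 0 by rewrite ex.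
  have ny : ~~ (p %| y)%N by rewrite py hC.
  have [hB|hB] := boolP (p %| `|B|)%N.
    have /eqP B0 : (B%:~R : 'F_p) == 0 by rewrite ex.
    have nE : ~~ (p %| `|E|)%N by move: Hp; rewrite hC hB.
    have nx : ~~ (p %| x)%N by rewrite px hB andbF.
    rewrite C0 B0 !mul0r add0r subr0 !mulf_eq0 !ex /=.
    by rewrite (negbTE nE) (negbTE nx) (negbTE ny).
  have /eqP x0 : ((x%:Z)%:~R : 'F_p) == 0 by rewrite ex /= px hC hB.
  rewrite C0 x0 !(mulr0, mul0r) !add0r oppr_eq0 !mulf_eq0 !ex /=.
  by rewrite (negbTE hB) (negbTE ny).
have /eqP y0 : ((y%:Z)%:~R : 'F_p) == 0 by rewrite ex /= py hC.
have nx : ~~ (p %| x)%N by rewrite px (negbTE hC).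
rewrite y0 !(mulr0, mul0r) subr0 addr0 !mulf_eq0 !ex /=.
by rewrite (negbTE hC) (negbTE nx).
Qed.

Lemma redmx_conj_int (n : nat) (A B Q : 'M[int]_2) : (1 < n)%N ->
  coprime n `|\det Q| -> Q *m A = B *m Q -> mx_conj (redmx n A) (redmx n B).
Proof.
move=> n1 cQ h; apply: (@conj_intro _ _ _ (redmx n Q)).
  by rewrite unitmxE /redmx det_map_mx intrZp_unit.
by rewrite /redmx -!map_mxM h.
Qed.

Lemma normal_form (n : nat) (M : 'M[int]_2) : (1 < n)%N -> mgcd M != 0 ->
  mx_conj (redmx n M)
    (redmx n (mk2 (M i0 i0) ((M i0 i1 %/ mgcd M)%Z * (M i1 i0 %/ mgcd M)%Z * mgcd M)
                  (mgcd M) (M i1 i1))).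
Proof.
move=> n1 g0.
set g := mgcd M.
have gb : (g %| M i0 i1)%Z by rewrite /g /mgcd; apply: dvdz_trans (dvdz_gcdl _ _) (dvdz_gcdl _ _).
have gc : (g %| M i1 i0)%Z by rewrite /g /mgcd; apply: dvdz_trans (dvdz_gcdl _ _) (dvdz_gcdr _ _).
have ge : (g %| M i1 i1 - M i0 i0)%Z by rewrite /g /mgcd; apply: dvdz_gcdr.
set be := (M i0 i1 %/ g)%Z.
set ga := (M i1 i0 %/ g)%Z.
set ep := ((M i1 i1 - M i0 i0) %/ g)%Z.
have Eb : M i0 i1 = be * g by rewrite divzK.
have Ec : M i1 i0 = ga * g by rewrite divzK.
have Ee : M i1 i1 - M i0 i0 = ep * g by rewrite divzK.
have Ed : M i1 i1 = M i0 i0 + ep * g by rewrite -Ee addrC subrK.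
have Hp : forall p, prime p -> (p %| n)%N ->
     ~~ [&& (p %| `|be|)%N, (p %| `|ga|)%N & (p %| `|ep|)%N].
  move=> p pp _; apply/negP => /and3P[pb pc pe].
  have : (p%:Z * g %| mgcd M)%Z.
    rewrite /mgcd !dvdz_gcd Eb Ec Ee.
    by rewrite !dvdz_mul ?dvdzz.
  rewrite -/g.
  rewrite dvdzE abszM /= => /dvdn_leq.
  have g0' : (0 < `|g|)%N by rewrite absz_gt0.
  move=> /(_ g0') H; have : (p * `|g| <= 1 * `|g|)%N by rewrite mul1n.
  by rewrite leq_pmul2r // leqNgt prime_gt1.
have [x [y cxy]] := form_coprime (ltnW n1) Hp.
apply: conj_sym.
pose Q := mk2 x (be * y) y (ga * x + ep * y).
apply: (@redmx_conj_int _ _ _ Q n1).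
  rewrite /Q det_mk2.
  have -> : x * (ga * x + ep * y) - be * y * y = ga * x ^+ 2 + ep * x * y - be * y ^+ 2 by ring.
  exact: cxy.
rewrite [in RHS](mk2E M) /Q !mk2_mul Eb Ec Ed.
by congr mk2; ring.
Qed.

Lemma parity_lemma (a a' u u' g L : int) : g != 0 ->
  a + (a + u * g) = a' + (a' + u' * g) ->
  a * (a + u * g) - a' * (a' + u' * g) = g ^+ 2 * L ->
  (g %| a' - a)%Z.
Proof.
move=> g0 H1 H2.
set e := a' - a; set w := u - u'.
have Hw : w * g = 2 * e by rewrite /w /e; lia.
have Ea' : a' = a + e by rewrite /e addrC subrK.
have Eu' : u' * g = u * g - 2 * e by rewrite -Hw /w; ring.
have He : e ^+ 2 - e * u * g = g ^+ 2 * L.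
  by rewrite -H2 Eu' Ea'; ring.
have Hg : g ^+ 2 * (w * (w - 2 * u)) = g ^+ 2 * (4 * L).
  have -> : g ^+ 2 * (w * (w - 2 * u)) = (w * g) ^+ 2 - 2 * u * g * (w * g) by ring.
  have -> : g ^+ 2 * (4 * L) = 4 * (g ^+ 2 * L) by ring.
  by rewrite Hw -He; ring.
have g20 : g ^+ 2 != 0 by rewrite expf_neq0.
have {Hg} Hw2 := mulfI g20 Hg.
have Ew := divz_eq w 2.
set q := (w %/ 2)%Z in Ew; set r := (w %% 2)%Z in Ew.
have r0 : 0 <= r by rewrite /r modz_ge0.
have r2 : r < 2 by rewrite /r ltz_pmod.
have [R0|R1] : r = 0 \/ r = 1 by lia.
  apply/dvdzP; exists q.
  apply: (@mulIf _ 2) => //.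
  by rewrite -[LHS]mulrC -Hw Ew R0 addr0; ring.
exfalso.
have : 2 * (2 * q ^+ 2 + 2 * q - 2 * q * u - u) + 1 = 4 * L.
  by rewrite -Hw2 Ew R1; ring.
lia.
Qed.

Lemma kstep (n : nat) (a d X a' d' X' g : int) : (1 < n)%N -> g != 0 ->
  a + d = a' + d' -> a * d - X * g = a' * d' - X' * g -> (g %| a' - a)%Z ->
  mx_conj (redmx n (mk2 a X g d)) (redmx n (mk2 a' X' g d')).
Proof.
move=> n1 g0 Ht Hd /dvdzP [k Hk].
have Ea' : a' = a + k * g by rewrite -Hk addrC subrK.
have Ed' : d' = d - k * g.
  by apply: (@addrI _ a'); rewrite -Ht Ea'; ring.
have HX : X' * g = (a' * d' - a * d) + X * g.
  have -> : a' * d' - a * d + X * g = a' * d' - (a * d - X * g) by ring.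
  by rewrite Hd; ring.
apply: (@redmx_conj_int _ _ _ (mk2 1 k 0 1) n1).
  by rewrite det_mk2 mulr1 mulr0 subr0 coprimen1.
rewrite !mk2_mul; congr mk2; rewrite ?Ea' ?Ed'; try ring.
apply: (mulIf g0); rewrite !mulrDl mulr1 HX Ea' Ed'; ring.
Qed.

Lemma tr_redmx n (M : 'M[int]_2) : \tr (redmx n M) = (\tr M)%:~R.
Proof. by rewrite /redmx (mk2E M) map_mk2 !tr_mk2 intrD. Qed.

Lemma det2 (M : 'M[int]_2) : \det M = M i0 i0 * M i1 i1 - M i0 i1 * M i1 i0.
Proof. by rewrite {1}(mk2E M) det_mk2. Qed.

Lemma tr2 (M : 'M[int]_2) : \tr M = M i0 i0 + M i1 i1.
Proof. by rewrite {1}(mk2E M) tr_mk2. Qed.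

Lemma mgcd_facts (M : 'M[int]_2) : mgcd M != 0 ->
  [/\ M i0 i1 = (M i0 i1 %/ mgcd M)%Z * mgcd M,
      M i1 i0 = (M i1 i0 %/ mgcd M)%Z * mgcd M &
      M i1 i1 = M i0 i0 + ((M i1 i1 - M i0 i0) %/ mgcd M)%Z * mgcd M].
Proof.
move=> g0.
have gb : (mgcd M %| M i0 i1)%Z by rewrite /mgcd; apply: dvdz_trans (dvdz_gcdl _ _) (dvdz_gcdl _ _).
have gc : (mgcd M %| M i1 i0)%Z by rewrite /mgcd; apply: dvdz_trans (dvdz_gcdl _ _) (dvdz_gcdr _ _).
have ge : (mgcd M %| M i1 i1 - M i0 i0)%Z by rewrite /mgcd; apply: dvdz_gcdr.
by rewrite !divzK // addrC subrK.
Qed.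

Lemma mgcd0 (M : 'M[int]_2) : mgcd M = 0 -> M = mk2 (M i0 i0) 0 0 (M i0 i0).
Proof.
move=> /eqP; rewrite /mgcd !gcdz_eq0 subr_eq0 => /andP[/andP[/eqP b /eqP c] /eqP d].
by rewrite {1}(mk2E M) b c d.
Qed.

Theorem theorem41 (M M' : 'M[int]_2) :
  (forall n : nat, (2 <= n)%N -> mx_conj (redmx n M) (redmx n M'))
  <->
  [/\ \det M = \det M', \tr M = \tr M' & mgcd M = mgcd M'].
Proof.
split=> [h | [hD hT hG]].
  split.
  - apply: int_eq_mod => n n2; have [+ _] := conj_det_tr (h n n2).
    by rewrite /redmx !det_map_mx.
  - apply: int_eq_mod => n n2; have [_ +] := conj_det_tr (h n n2).
    by rewrite !tr_redmx.
  - have E : forall N, mgcd N = (`|mgcd N|%N)%:Z by [].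
    rewrite (E M) (E M'); congr Posz; apply: nat_eq_dvd => k k1.
    rewrite -!redmx_isc //; apply/idP/idP; apply: conj_isc.
    by apply: h.
    by apply: conj_sym; apply: h.
move=> n n2.
have [g0|g0] := eqVneq (mgcd M) 0.
  have g0' : mgcd M' = 0 by rewrite -hG.
  have d1 : M i1 i1 = M i0 i0 by rewrite {1}(mgcd0 g0) mk2_11.
  have d2 : M' i1 i1 = M' i0 i0 by rewrite {1}(mgcd0 g0') mk2_11.
  have ht : M' i0 i0 = M i0 i0 by move: hT; rewrite !tr2 d1 d2; lia.
  rewrite (mgcd0 g0) (mgcd0 g0') ht.
  exact: conj_refl.
have g0' : mgcd M' != 0 by rewrite -hG.
apply: conj_trans (normal_form n2 g0) _.
apply: conj_trans (conj_sym (normal_form n2 g0')).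
rewrite -hG.
have [Eb Ec Ed] := mgcd_facts g0.
have [Eb' Ec' Ed'] := mgcd_facts g0'.
rewrite -hG in Eb' Ec' Ed'.
move: hD hT; rewrite !det2 !tr2 => hD hT.
apply: kstep => //.
  have H : forall (x y g : int), x * y * g * g = (x * g) * (y * g) by move=> *; ring.
  by rewrite !H -Eb -Ec -Eb' -Ec'.
set g := mgcd M in Eb Ec Ed Eb' Ec' Ed' g0 *.
set be := (M i0 i1 %/ g)%Z in Eb; set ga := (M i1 i0 %/ g)%Z in Ec.
set be' := (M' i0 i1 %/ g)%Z in Eb'; set ga' := (M' i1 i0 %/ g)%Z in Ec'.
set ep := ((M i1 i1 - M i0 i0) %/ g)%Z in Ed.
set ep' := ((M' i1 i1 - M' i0 i0) %/ g)%Z in Ed'.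
apply: (@parity_lemma _ _ ep ep' g (be * ga - be' * ga') g0).
  by rewrite -Ed -Ed'.
rewrite -Ed -Ed'.
have X1 : M i0 i1 * M i1 i0 = g ^+ 2 * (be * ga) by rewrite {1}Eb {1}Ec; ring.
have X2 : M' i0 i1 * M' i1 i0 = g ^+ 2 * (be' * ga') by rewrite {1}Eb' {1}Ec'; ring.
have key : forall A A' B B' : int, A - B = A' - B' -> A - A' = B - B'.
  by move=> A A' B B' h; rewrite -(subrK B A) h; ring.
rewrite mulrBr -X1 -X2; exact: key.
Qed.
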